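(* The SISO tree refinement relation $\lesssim$ is reflexive and transitive on SISO trees.
   Context: Sorts: $\mathsf{S} ::= \mathtt{nat} \mid \mathtt{int} \mid \mathtt{bool} \mid \mathtt{unit}$; subsorting $\leq:$ is the least reflexive relation on sorts with $\mathtt{nat}\leq:\mathtt{int}$. Participants $\mathsf{p},\mathsf{q},\mathsf{r}$ and labels $\ell$ range over fixed sets. SISO trees are the possibly infinite terms generated coinductively by $\mathsf{W} ::= \mathtt{end} \mid \mathsf{p}?\ell(\mathsf{S}).\mathsf{W} \mid \mathsf{p}!\ell(\mathsf{S}).\mathsf{W}$ (input from / output to participant $\mathsf{p}$ of label $\ell$ with payload sort $\mathsf{S}$). $\mathrm{act}(\mathsf{W})$ is defined coinductively by $\mathrm{act}(\mathtt{end})=\emptyset$, $\mathrm{act}(\mathsf{p}?\ell(\mathsf{S}).\mathsf{W})=\{\mathsf{p}?\}\cup\mathrm{act}(\mathsf{W})$, $\mathrm{act}(\mathsf{p}!\ell(\mathsf{S}).\mathsf{W})=\{\mathsf{p}!\}\cup\mathrm{act}(\mathsf{W})$. For a participant $\mathsf{p}$, $\mathcal{A}^{(\mathsf{p})}$ ranges over nonempty finite sequences of inputs $\mathsf{q}?\ell(\mathsf{S})$ with $\mathsf{q}\neq\mathsf{p}$, and $\mathcal{B}^{(\mathsf{p})}$ over nonempty finite sequences whose elements are inputs $\mathsf{r}?\ell(\mathsf{S})$ (any $\mathsf{r}$) or outputs $\mathsf{q}!\ell(\mathsf{S})$ with $\mathsf{q}\neq\mathsf{p}$; $\mathcal{A}^{(\mathsf{p})}.\mathsf{W}$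 denotes the SISO tree obtained by prefixing $\mathsf{W}$ with the sequence. The SISO refinement $\lesssim$ is the largest relation on SISO trees closed backward under the rules: (ref-in) $\mathsf{p}?\ell(\mathsf{S}).\mathsf{W}\lesssim\mathsf{p}?\ell(\mathsf{S}').\mathsf{W}'$ if $\mathsf{S}'\leq:\mathsf{S}$ and $\mathsf{W}\lesssim\mathsf{W}'$; (ref-$\mathcal{A}$) $\mathsf{p}?\ell(\mathsf{S}).\mathsf{W}\lesssim\mathcal{A}^{(\mathsf{p})}.\mathsf{p}?\ell(\mathsf{S}').\mathsf{W}'$ if $\mathsf{S}'\leq:\mathsf{S}$, $\mathsf{W}\lesssim\mathcal{A}^{(\mathsf{p})}.\mathsf{W}'$ and $\mathrm{act}(\mathsf{W})=\mathrm{act}(\mathcal{A}^{(\mathsf{p})}.\mathsf{W}')$; (ref-out) $\mathsf{p}!\ell(\mathsf{S}).\mathsf{W}\lesssim\mathsf{p}!\ell(\mathsf{S}').\mathsf{W}'$ if $\mathsf{S}\leq:\mathsf{S}'$ and $\mathsf{W}\lesssim\mathsf{W}'$; (ref-$\mathcal{B}$) $\mathsf{p}!\ell(\mathsf{S}).\mathsf{W}\lesssim\mathcal{B}^{(\mathsf{p})}.\mathsf{p}!\ell(\mathsf{S}').\mathsf{W}'$ if $\mathsf{S}\leq:\mathsf{S}'$, $\mathsf{W}\lesssim\mathcal{B}^{(\mathsf{p})}.\mathsf{W}'$ and $\mathrm{act}(\mathsf{W})=\mathrm{act}(\mathcal{B}^{(\mathsf{p})}.\mathsf{W}')$; (ref-end)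 $\mathtt{end}\lesssim\mathtt{end}$. *)

(* Defs.v *)
From Stdlib Require Import List.
Import ListNotations.

Set Implicit Arguments.

Inductive sort := Snat | Sint | Sbool | Sunit.

Inductive subsort : sort -> sort -> Prop :=
| subsort_refl : forall So, subsort So So
| subsort_nat_int : subsort Snat Sint.

Section Siso.
Variables (Part Lab : Type).

CoInductive siso : Type :=
| Wend : siso
| Win : Part -> Lab -> sort -> siso -> siso
| Wout : Part -> Lab -> sort -> siso -> siso.

Inductive prefix : Type :=
| Pin : Part -> Lab -> sort -> prefix
| Pout : Part -> Lab -> sort -> prefix.

Definition prefix_one (a : prefix) (W : siso) : siso :=
  match a with
  | Pin p l So => Win p l So W
  | Pout p l So => Wout p l So W
  end.

Definition prefix_seq (s : list prefix) (W : siso) : siso :=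
  fold_right prefix_one W s.

Definition is_A (p : Part) (s : list prefix) : Prop :=
  s <> [] /\
  Forall (fun a => exists q l So, a = Pin q l So /\ q <> p) s.

Definition is_B (p : Part) (s : list prefix) : Prop :=
  s <> [] /\
  Forall (fun a => (exists r l So, a = Pin r l So) \/
                   (exists q l So, a = Pout q l So /\ q <> p)) s.

Inductive direction := Dir_in | Dir_out.

Inductive in_act : Part * direction -> siso -> Prop :=
| in_act_in_here : forall p l So W, in_act (p, Dir_in) (Win p l So W)
| in_act_out_here : forall p l So W, in_act (p, Dir_out) (Wout p l So W)
| in_act_in_later : forall x p l So W, in_act x W -> in_act x (Win p l So W)
| in_act_out_later : forall x p l So W, in_act x W -> in_act x (Wout p l So W).

Definition same_act (W W' : siso) : Prop :=
  forall x, in_act x W <-> in_act x W'.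

CoInductive refines : siso -> siso -> Prop :=
| ref_in : forall p l So So' W W',
    subsort So' So -> refines W W' ->
    refines (Win p l So W) (Win p l So' W')
| ref_A : forall p l So So' W W' A,
    is_A p A -> subsort So' So ->
    refines W (prefix_seq A W') ->
    same_act W (prefix_seq A W') ->
    refines (Win p l So W) (prefix_seq A (Win p l So' W'))
| ref_out : forall p l So So' W W',
    subsort So So' -> refines W W' ->
    refines (Wout p l So W) (Wout p l So' W')
| ref_B : forall p l So So' W W' B,
    is_B p B -> subsort So So' ->
    refines W (prefix_seq B W') ->
    same_act W (prefix_seq B W') ->
    refines (Wout p l So W) (prefix_seq B (Wout p l So' W'))
| ref_end : refines Wend Wend.

End Siso.

(* Main.v *)
Require Import Defs.
From Stdlib Require Import List.
Import ListNotations.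

Section Proofs.
Variables (Part Lab : Type).
Notation siso := (siso Part Lab).
Notation prefix := (prefix Part Lab).

Definition okA (p : Part) (a : prefix) : Prop :=
  exists q l So, a = Pin q l So /\ q <> p.
Definition okB (p : Part) (a : prefix) : Prop :=
  (exists r l So, a = Pin r l So) \/ (exists q l So, a = Pout q l So /\ q <> p).

Definition actof (a : prefix) : Part * direction :=
  match a with Pin p _ _ => (p, Dir_in) | Pout p _ _ => (p, Dir_out) end.

Lemma subsort_trans : forall a b c, subsort a b -> subsort b c -> subsort a c.
Proof. intros a b c H1 H2; destruct H1; inversion H2; subst; constructor. Qed.

Lemma prefix_seq_app : forall (A B : list prefix) X,
  prefix_seq (A ++ B) X = prefix_seq A (prefix_seq B X).
Proof. intros; unfold prefix_seq; apply fold_right_app. Qed.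

Lemma prefix_one_inj : forall (a b : prefix) X Y,
  prefix_one a X = prefix_one b Y -> a = b /\ X = Y.
Proof.
  intros [] [] X Y H; simpl in H; inversion H; subst; auto.
Qed.

Lemma prefix_split : forall (C A : list prefix) X Z,
  prefix_seq C X = prefix_seq A Z ->
  (exists A2, A = C ++ A2 /\ X = prefix_seq A2 Z) \/
  (exists a C2, C = A ++ a :: C2 /\ Z = prefix_one a (prefix_seq C2 X)).
Proof.
  induction C as [|c C IH]; intros A X Z H.
  - left. exists A. auto.
  - destruct A as [|a A].
    + right. exists c, C. simpl in *. auto.
    + simpl in H. apply prefix_one_inj in H. destruct H as [-> H].
      destruct (IH _ _ _ H) as [[A2 [E1 E2]]|[a0 [C2 [E1 E2]]]].
      * left. exists A2. subst. auto.
      * right. exists a0, C2. subst. auto.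
Qed.

Lemma in_act_one : forall x (b : prefix) Z,
  in_act x (prefix_one b Z) <-> x = actof b \/ in_act x Z.
Proof.
  intros x b Z; split.
  - destruct b; simpl; intro H; inversion H; subst; auto.
  - destruct b; simpl; intros [H|H]; subst; constructor; auto.
Qed.

Lemma in_act_prefix : forall x (A : list prefix) Z,
  in_act x (prefix_seq A Z) <-> (exists a, In a A /\ x = actof a) \/ in_act x Z.
Proof.
  induction A as [|a A IH]; intros Z; simpl.
  - split; [auto| intros [[a [[] _]]|H]; auto].
  - split.
    + intro H. change (in_act x (prefix_one a (prefix_seq A Z))) in H.
      apply in_act_one in H. destruct H as [H|H].
      * left. exists a; auto.
      * apply IH in H. destruct H as [[a0 [H1 H2]]|H]; auto.
        left; exists a0; auto.
    + intros H. change (in_act x (prefix_one a (prefix_seq A Z))).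
      apply in_act_one. destruct H as [[a0 [[H1|H1] H2]]|H].
      * subst; auto.
      * right; apply IH; left; exists a0; auto.
      * right; apply IH; auto.
Qed.

Lemma inv_in : forall p l S (W V : siso), refines (Win p l S W) V ->
  exists A S' V', Forall (okA p) A /\ V = prefix_seq A (Win p l S' V') /\
    subsort S' S /\ refines W (prefix_seq A V').
Proof.
  intros p l S W V H. remember (Win p l S W) as X eqn:EX.
  destruct H; try discriminate; injection EX; intros; subst.
  - exists [], So', W'. simpl. auto.
  - exists A, So', W'. destruct H as [_ H]. auto.
Qed.

Lemma inv_out : forall p l S (W V : siso), refines (Wout p l S W) V ->
  exists B S' V', Forall (okB p) B /\ V = prefix_seq B (Wout p l S' V') /\
    subsort S S' /\ refines W (prefix_seq B V').
Proof.
  intros p l S W V H. remember (Wout p l S W) as X eqn:EX.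
  destruct H; try discriminate; injection EX; intros; subst.
  - exists [], So', W'. simpl. auto.
  - exists B, So', W'. destruct H as [_ H]. auto.
Qed.

Lemma act1 : forall x (W : siso), in_act x W -> forall V, refines W V -> in_act x V.
Proof.
  intros x W H; induction H; intros V HR.
  - apply inv_in in HR. destruct HR as [A [S' [V' [_ [-> _]]]]].
    apply in_act_prefix; right; constructor.
  - apply inv_out in HR. destruct HR as [A [S' [V' [_ [-> _]]]]].
    apply in_act_prefix; right; constructor.
  - apply inv_in in HR. destruct HR as [A [S' [V' [_ [-> [_ HR]]]]]].
    apply IHin_act in HR. apply in_act_prefix in HR. apply in_act_prefix.
    destruct HR as [HR|HR]; auto. right; constructor; auto.
  - apply inv_out in HR. destruct HR as [A [S' [V' [_ [-> [_ HR]]]]]].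
    apply IHin_act in HR. apply in_act_prefix in HR. apply in_act_prefix.
    destruct HR as [HR|HR]; auto. right; constructor; auto.
Qed.

Lemma helper : forall x (A : list prefix) b b' (V' W0 : siso),
  actof b = actof b' ->
  in_act x (prefix_seq A (prefix_one b V')) -> same_act W0 (prefix_seq A V') ->
  in_act x (prefix_one b' W0).
Proof.
  intros x A b b' V' W0 Eb H Hs. apply in_act_one.
  apply in_act_prefix in H. destruct H as [[a [H1 H2]]|H].
  - right. apply Hs. apply in_act_prefix. left; eauto.
  - apply in_act_one in H. destruct H as [H|H].
    + left; congruence.
    + right. apply Hs. apply in_act_prefix. auto.
Qed.

Lemma act2 : forall x (V : siso), in_act x V -> forall W, refines W V -> in_act x W.
Proof.
  intros x V H; induction H; intros W0 HR;
  match type of HR with refines _ ?V0 =>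
    match goal with |- in_act ?y _ =>
    assert (HV : in_act y V0) by (constructor; auto) end; remember V0 as VV eqn:EV end;
  destruct HR; try discriminate.
  all: try (injection EV; intros; subst; solve [constructor; auto]).
  all:
    match goal with
    | |- in_act _ (Win ?a ?b ?c ?d) => change (Win a b c d) with (prefix_one (Pin a b c) d)
    | |- in_act _ (Wout ?a ?b ?c ?d) => change (Wout a b c d) with (prefix_one (Pout a b c) d)
    end;
    match type of HV with
    | in_act _ (prefix_seq ?A (Win ?a ?b ?c ?d)) =>
        change (Win a b c d) with (prefix_one (Pin a b c) d) in HV
    | in_act _ (prefix_seq ?A (Wout ?a ?b ?c ?d)) =>
        change (Wout a b c d) with (prefix_one (Pout a b c) d) in HV
    end;
    eapply helper; [| exact HV | eassumption]; reflexivity.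
Qed.

Lemma ref_same : forall W V : siso, refines W V -> same_act W V.
Proof. intros W V H x; split; intro Hx; [eapply act1|eapply act2]; eauto. Qed.

Lemma mk_in : forall q l s s' (C : list prefix) (W V : siso),
  Forall (okA q) C -> subsort s' s -> refines W (prefix_seq C V) ->
  refines (Win q l s W) (prefix_seq C (Win q l s' V)).
Proof.
  intros q l s s' C W V HC Hs HR. destruct C as [|c C].
  - simpl in *. apply ref_in; auto.
  - apply ref_A; auto.
    + split; [discriminate| exact HC].
    + apply ref_same; auto.
Qed.

Lemma mk_out : forall q l s s' (C : list prefix) (W V : siso),
  Forall (okB q) C -> subsort s s' -> refines W (prefix_seq C V) ->
  refines (Wout q l s W) (prefix_seq C (Wout q l s' V)).
Proof.
  intros q l s s' C W V HC Hs HR. destruct C as [|c C].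
  - simpl in *. apply ref_out; auto.
  - apply ref_B; auto.
    + split; [discriminate| exact HC].
    + apply ref_same; auto.
Qed.

Lemma L_in : forall p l S2 (W2' : siso) (A : list prefix),
  Forall (okA p) A -> forall W3, refines (prefix_seq A (Win p l S2 W2')) W3 ->
  exists A' S3 W3', Forall (okA p) A' /\ W3 = prefix_seq A' (Win p l S3 W3') /\
    subsort S3 S2 /\ refines (prefix_seq A W2') (prefix_seq A' W3').
Proof.
  intros p l S2 W2' A. induction A as [|a A0 IH]; intros HA W3 HR.
  - simpl in HR. apply inv_in in HR. exact HR.
  - inversion HA as [|? ? Ha HA0]; subst.
    destruct Ha as [q [l' [s' [-> Hq]]]].
    simpl in HR. apply inv_in in HR.
    destruct HR as [C [s3 [W3'' [HC [-> [Hs HR]]]]]].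
    destruct (IH HA0 _ HR) as [A1 [S3 [W3' [HA1 [E [HS3 HR1]]]]]].
    destruct (prefix_split _ _ _ _ E) as [[A2 [E1 E2]]|[a0 [C2 [E1 E2]]]].
    + subst A1 W3''. apply Forall_app in HA1. destruct HA1 as [HCp HA2].
      exists (C ++ Pin q l' s3 :: A2), S3, W3'. split; [|split; [|split]].
      * apply Forall_app; split; auto. constructor; auto.
        exists q, l', s3; auto.
      * rewrite prefix_seq_app. reflexivity.
      * auto.
      * rewrite prefix_seq_app. simpl. apply mk_in; auto.
        rewrite <- prefix_seq_app. exact HR1.
    + destruct a0 as [p0 l0 s0|p0 l0 s0]; simpl in E2; [|discriminate].
      injection E2; intros; subst.
      apply Forall_app in HC. destruct HC as [HC1 HC2].
      inversion HC2; subst.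
      exists A1, s0, (prefix_seq C2 (Win q l' s3 W3'')). split; [|split; [|split]]; auto.
      * rewrite prefix_seq_app. reflexivity.
      * simpl. rewrite <- prefix_seq_app. apply mk_in; auto.
        -- apply Forall_app; auto.
        -- rewrite prefix_seq_app. exact HR1.
Qed.

Lemma L_out : forall p l S2 (W2' : siso) (B : list prefix),
  Forall (okB p) B -> forall W3, refines (prefix_seq B (Wout p l S2 W2')) W3 ->
  exists B' S3 W3', Forall (okB p) B' /\ W3 = prefix_seq B' (Wout p l S3 W3') /\
    subsort S2 S3 /\ refines (prefix_seq B W2') (prefix_seq B' W3').
Proof.
  intros p l S2 W2' B. induction B as [|a B0 IH]; intros HB W3 HR.
  - simpl in HR. apply inv_out in HR. exact HR.
  - inversion HB as [|? ? Ha HB0]; subst.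
    destruct Ha as [[r [l' [s' ->]]]|[q [l' [s' [-> Hq]]]]].
    + simpl in HR. apply inv_in in HR.
      destruct HR as [C [s3 [W3'' [HC [-> [Hs HR]]]]]].
      destruct (IH HB0 _ HR) as [B1 [S3 [W3' [HB1 [E [HS3 HR1]]]]]].
      destruct (prefix_split _ _ _ _ E) as [[B2 [E1 E2]]|[a0 [C2 [E1 E2]]]].
      * subst B1 W3''. apply Forall_app in HB1. destruct HB1 as [HCp HB2].
        exists (C ++ Pin r l' s3 :: B2), S3, W3'. split; [|split; [|split]].
        -- apply Forall_app; split; auto. constructor; auto.
           left; exists r, l', s3; auto.
        -- rewrite prefix_seq_app. reflexivity.
        -- auto.
        -- rewrite prefix_seq_app. simpl. apply mk_in; auto.
           rewrite <- prefix_seq_app. exact HR1.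
      * subst C. apply Forall_app in HC. destruct HC as [_ HC2].
        inversion HC2 as [|? ? Ha0 _]; subst.
        destruct Ha0 as [? [? [? [-> _]]]]. simpl in E2. discriminate.
    + simpl in HR. apply inv_out in HR.
      destruct HR as [D [s3 [W3'' [HD [-> [Hs HR]]]]]].
      destruct (IH HB0 _ HR) as [B1 [S3 [W3' [HB1 [E [HS3 HR1]]]]]].
      destruct (prefix_split _ _ _ _ E) as [[B2 [E1 E2]]|[a0 [C2 [E1 E2]]]].
      * subst B1 W3''. apply Forall_app in HB1. destruct HB1 as [HDp HB2].
        exists (D ++ Pout q l' s3 :: B2), S3, W3'. split; [|split; [|split]].
        -- apply Forall_app; split; auto. constructor; auto.
           right; exists q, l', s3; auto.
        -- rewrite prefix_seq_app. reflexivity.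
        -- auto.
        -- rewrite prefix_seq_app. simpl. apply mk_out; auto.
           rewrite <- prefix_seq_app. exact HR1.
      * destruct a0 as [p0 l0 s0|p0 l0 s0]; simpl in E2; [discriminate|].
        injection E2; intros; subst.
        apply Forall_app in HD. destruct HD as [HD1 HD2].
        inversion HD2; subst.
        exists B1, s0, (prefix_seq C2 (Wout q l' s3 W3'')). split; [|split; [|split]]; auto.
        -- rewrite prefix_seq_app. reflexivity.
        -- simpl. rewrite <- prefix_seq_app. apply mk_out; auto.
           ++ apply Forall_app; auto.
           ++ rewrite prefix_seq_app. exact HR1.
Qed.

Inductive refF (R : siso -> siso -> Prop) : siso -> siso -> Prop :=
| refF_in : forall p l So So' W W',
    subsort So' So -> R W (prefix_seq [] W') ->
    refF R (Win p l So W) (prefix_seq [] (Win p l So' W'))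
| refF_A : forall p l So So' W W' A,
    Forall (okA p) A -> A <> [] -> subsort So' So ->
    R W (prefix_seq A W') -> same_act W (prefix_seq A W') ->
    refF R (Win p l So W) (prefix_seq A (Win p l So' W'))
| refF_out : forall p l So So' W W',
    subsort So So' -> R W W' ->
    refF R (Wout p l So W) (Wout p l So' W')
| refF_B : forall p l So So' W W' B,
    Forall (okB p) B -> B <> [] -> subsort So So' ->
    R W (prefix_seq B W') -> same_act W (prefix_seq B W') ->
    refF R (Wout p l So W) (prefix_seq B (Wout p l So' W'))
| refF_end : refF R (Wend _ _) (Wend _ _).

Lemma refines_coind (R : siso -> siso -> Prop) :
  (forall W V, R W V -> refF R W V) -> forall W V, R W V -> refines W V.
Proof.
  intros Hstep. cofix CIH. intros W V HR.
  destruct (Hstep W V HR).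
  - apply ref_in; [assumption| apply CIH; assumption].
  - apply ref_A; [split; assumption|assumption| apply CIH; assumption|assumption].
  - apply ref_out; [assumption| apply CIH; assumption].
  - apply ref_B; [split; assumption|assumption| apply CIH; assumption|assumption].
  - apply ref_end.
Qed.

Lemma refF_in_gen : forall (R : siso -> siso -> Prop) q l s s' C W V,
  Forall (okA q) C -> subsort s' s -> R W (prefix_seq C V) ->
  same_act W (prefix_seq C V) ->
  refF R (Win q l s W) (prefix_seq C (Win q l s' V)).
Proof.
  intros R q l s s' C W V HC Hs HR Ha. destruct C as [|c C].
  - apply refF_in; auto.
  - apply refF_A; auto. discriminate.
Qed.

Lemma refF_out_gen : forall (R : siso -> siso -> Prop) q l s s' C W V,
  Forall (okB q) C -> subsort s s' -> R W (prefix_seq C V) ->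
  same_act W (prefix_seq C V) ->
  refF R (Wout q l s W) (prefix_seq C (Wout q l s' V)).
Proof.
  intros R q l s s' C W V HC Hs HR Ha. destruct C as [|c C].
  - apply refF_out; auto.
  - apply refF_B; auto. discriminate.
Qed.

Lemma refines_refl : forall W : siso, refines W W.
Proof.
  cofix CIH. intros [| p l S W | p l S W].
  - apply ref_end.
  - apply ref_in; [constructor| apply CIH].
  - apply ref_out; [constructor| apply CIH].
Qed.

Lemma refines_trans : forall W1 W2 W3 : siso,
  refines W1 W2 -> refines W2 W3 -> refines W1 W3.
Proof.
  intros W1 W2 W3 H12 H23.
  apply (refines_coind (fun X Z => exists Y, refines X Y /\ refines Y Z)); [|eauto].
  clear. intros X Z [Y [H1 H2]].
  destruct X as [| p l S X' | p l S X'].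
  - inversion H1; subst. inversion H2; subst. apply refF_end.
  - apply inv_in in H1. destruct H1 as [A [S2 [Y' [HA [-> [Hs1 H1]]]]]].
    destruct (L_in _ _ _ _ _ HA _ H2) as [A' [S3 [Z' [HA' [-> [Hs2 H2']]]]]].
    apply refF_in_gen; eauto using subsort_trans.
    intro x. rewrite (ref_same _ _ H1 x). apply ref_same; auto.
  - apply inv_out in H1. destruct H1 as [A [S2 [Y' [HA [-> [Hs1 H1]]]]]].
    destruct (L_out _ _ _ _ _ HA _ H2) as [A' [S3 [Z' [HA' [-> [Hs2 H2']]]]]].
    apply refF_out_gen; eauto using subsort_trans.
    intro x. rewrite (ref_same _ _ H1 x). apply ref_same; auto.
Qed.

End Proofs.

Theorem lemma3p3 (Part Lab : Type) :
  (forall W : siso Part Lab, refines W W) /\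
  (forall W1 W2 W3 : siso Part Lab,
      refines W1 W2 -> refines W2 W3 -> refines W1 W3).
Proof.
  split; [apply refines_refl | apply refines_trans].
Qed.
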